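(* For every $n$ there exists a dynamic graph on $n$ nodes (with integral initial loads) defined by an adaptive adversary such that no matching-based integral load balancing algorithm can reduce the maximal difference between loads in the graph below $n-1$, regardless of the running time; i.e., at every round $t$, $\max_{u,v}|w_t(u)-w_t(v)|\ge n-1$.
   Context: Integral load balancing: a fixed set of $n$ nodes with non-negative integer loads that must remain integers; the total load is preserved. The network is a dynamic graph, a sequence of connected graphs on the nodes, where the graph of each round may be chosen by an adaptive adversary after seeing everything that happened so far. In each round nodes may exchange information with all current neighbours; a matching-based algorithm is one in which, in each round, the pairs of nodes that exchange load form a matching of the current graph, and within each such pair the two nodes redistribute their combined load between them (as integers); nodes not in the matching keep their load. *)

(* Defs.v *)
From mathcomp Require Import all_boot all_order all_algebra.
Set Implicit Arguments. Unset Strict Implicit. Unset Printing Implicit Defensive.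

Definition loads (n : nat) := {ffun 'I_n -> nat}.

(* A matching is represented by a partner function p : 'I_n -> 'I_n that is
   an involution; p u = u means u is unmatched, otherwise {u, p u} is an edge
   of the matching. *)
Definition partner (n : nat) := {ffun 'I_n -> 'I_n}.

Definition connected_graph (n : nat) (g : rel 'I_n) : Prop :=
  (forall u v, g u v = g v u) /\ (forall u, ~~ g u u) /\ (forall u v, connect g u v).

Definition is_matching (n : nat) (g : rel 'I_n) (p : partner n) : Prop :=
  (forall u, p (p u) = u) /\ (forall u, p u != u -> g u (p u)).

Definition matching_step (n : nat) (g : rel 'I_n) (p : partner n)
    (w w' : loads n) : Prop :=
  is_matching g p /\
  (forall u, p u = u -> w' u = w u) /\
  (forall u, p u != u -> w' u + w' (p u) = w u + w (p u)).

Definition hist (n : nat) (w : nat -> loads n) (p : nat -> partner n) (t : nat)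
    : seq (loads n * partner n) :=
  [seq (w i, p i) | i <- iota 0 t].

Definition maxdiff (n : nat) (w : loads n) : nat :=
  \max_(u < n) \max_(v < n) `|w u - w v|%N.

(* Main.v *)
Require Import Defs.
From mathcomp Require Import all_boot all_order all_algebra.
From mathcomp Require Import zify.

Section S.
Variable n : nat.

Definition T (k : nat) : nat := \sum_(i < k) i.
Lemma TS k : T k.+1 = T k + k.
Proof. by rewrite /T big_ord_recr. Qed.

Definition Inv (w : loads n) := forall k, k <= n ->
  exists A : {set 'I_n}, #|A| = k /\ \sum_(u in A) w u <= T k.

Definition srt (w : loads n) := sort (fun u v : 'I_n => w u <= w v) (enum 'I_n).
Definition pos (w : loads n) (u : 'I_n) := index u (srt w).
Definition pathg (w : loads n) : rel 'I_n := fun u v =>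
  ((pos w u).+1 == pos w v) || ((pos w v).+1 == pos w u).
Definition B (w : loads n) k := [set u | pos w u < k].

Lemma srt_uniq w : uniq (srt w).
Proof. by rewrite sort_uniq enum_uniq. Qed.
Lemma srt_size w : size (srt w) = n.
Proof. by rewrite size_sort size_enum_ord. Qed.
Lemma srt_mem w u : u \in srt w.
Proof. by rewrite mem_sort mem_enum. Qed.
Lemma pos_lt w u : pos w u < n.
Proof. by move: (srt_mem w u); rewrite -index_mem srt_size. Qed.
Lemma pos_inj w u v : pos w u = pos w v -> u = v.
Proof.
move=> h; rewrite -(nth_index u (srt_mem w u)) -(nth_index u (srt_mem w v)).
by rewrite -/(pos w u) -/(pos w v) h.
Qed.
Lemma pos_nth w x0 i : i < n -> pos w (nth x0 (srt w) i) = i.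
Proof. by move=> hi; rewrite /pos index_uniq ?srt_uniq ?srt_size. Qed.
Lemma nth_pos w x0 u : nth x0 (srt w) (pos w u) = u.
Proof. by rewrite nth_index ?srt_mem. Qed.

Lemma srt_sorted w u v : pos w u <= pos w v -> w u <= w v.
Proof.
move=> h.
have H := @sorted_leq_nth _ (fun u v : 'I_n => w u <= w v)
  (fun a b c => @leq_trans (w a) (w b) (w c)) (fun a => leqnn (w a)) u (srt w)
  (sort_sorted (fun a b => leq_total (w a) (w b)) _).
have := H (pos w u) (pos w v); rewrite !nth_pos; apply => //.
- by rewrite inE srt_size pos_lt.
- by rewrite inE srt_size pos_lt.
Qed.

Lemma card_B w k : k <= n -> #|B w k| = k.
Proof.
move=> hk.
have -> : B w k = [set u in take k (srt w)].
  by apply/setP=> u; rewrite !inE in_take ?srt_mem.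
rewrite cardsE; move/card_uniqP: (take_uniq k (srt_uniq w)) => ->.
by rewrite size_take srt_size; case: ltnP => // h; apply/eqP; rewrite eqn_leq hk h.
Qed.

Lemma B_min w k (A : {set 'I_n}) : k <= n -> #|A| = k ->
  \sum_(u in B w k) w u <= \sum_(u in A) w u.
Proof.
move=> hk hA.
rewrite (big_setID (A:=B w k) A) (big_setID (A:=A) (B w k)) setIC leq_add2l.
set X := B w k :\: A; set Y := A :\: B w k.
have hc : #|X| = #|Y|.
  have h1 := cardsID A (B w k); have h2 := cardsID (B w k) A.
  rewrite card_B // in h1; rewrite setIC hA in h2. rewrite /X /Y; apply: (@addnI #|B w k :&: A|); by rewrite h1 h2.
have e1 : \sum_(u in X) \sum_(v in Y) w u = #|Y| * \sum_(u in X) w u.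
  by rewrite big_distrr; apply: eq_bigr => u _; rewrite sum_nat_const.
have e2 : \sum_(u in X) \sum_(v in Y) w v = #|X| * \sum_(v in Y) w v.
  by rewrite sum_nat_const.
have key : #|Y| * \sum_(u in X) w u <= #|X| * \sum_(u in Y) w u.
  rewrite -e1 -e2; apply: leq_sum => u hu; apply: leq_sum => v hv.
  apply: srt_sorted.
  move: hu hv; rewrite /X /Y !inE => /andP[hu1 hu2] /andP[hv1 hv2].
  by rewrite -leqNgt in hv1; apply: ltnW; apply: leq_trans hu2 hv1.
case: (posnP #|X|) => h0.
  have : X = set0 by apply/eqP; rewrite -cards_eq0 h0.
  by move=> ->; rewrite big_set0.
by rewrite hc leq_pmul2l // -hc in key.
Qed.

Lemma Inv_B w k : Inv w -> k <= n -> \sum_(u in B w k) w u <= T k.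
Proof.
move=> hI hk; have [A [hA hs]] := hI k hk.
apply: leq_trans hs; exact: B_min.
Qed.

Lemma pathg_conn w : connected_graph (pathg w).
Proof.
split; first by move=> u v; rewrite /pathg orbC.
split; first by move=> u; rewrite /pathg orbb eqn_leq ltnn.
move=> u.
have h0 : forall i, i < n -> connect (pathg w) (nth u (srt w) 0) (nth u (srt w) i).
  elim=> [|i IH] hi //.
  apply: connect_trans (IH (ltnW hi)) _; apply: connect1.
  by rewrite /pathg !pos_nth // ?eqxx // ltnW.
have sym : connect_sym (pathg w) by apply: sym_connect_sym => a b; rewrite /pathg orbC.
move=> v; apply: (@connect_trans _ _ (nth u (srt w) 0)).
  by rewrite sym -{2}(nth_pos w u u); apply: h0; apply: pos_lt.
by rewrite -(nth_pos w u v); apply: h0; apply: pos_lt.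
Qed.


Arguments Inv_B {w k}.

Lemma sum_closed (g : rel 'I_n) p (w w' : loads n) (A : {set 'I_n}) :
  matching_step g p w w' -> (forall u, u \in A -> p u \in A) ->
  \sum_(u in A) w' u = \sum_(u in A) w u.
Proof.
case=> [[pinv _] [hfix hpair]] hA.
have pinj : injective p := can_inj pinv.
have eA : forall u, (p u \in A) = (u \in A).
  by move=> u; apply/idP/idP => [/hA|/hA//]; rewrite pinv.
have re : forall f : 'I_n -> nat, \sum_(u in A) f (p u) = \sum_(u in A) f u.
  move=> f; symmetry; rewrite (reindex_inj pinj); apply: eq_bigl => u.
  by rewrite eA.
suff : \sum_(u in A) w' u + \sum_(u in A) w' u = \sum_(u in A) w u + \sum_(u in A) w u by lia.
rewrite -{2}(re w') -{2}(re w) -!big_split; apply: eq_bigr => u _.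
case: (eqVneq (p u) u) => h; first by rewrite h hfix.
exact: hpair.
Qed.
Arguments sum_closed {g p w w' A}.

Lemma adj w p u : is_matching (pathg w) p -> p u != u ->
  pos w (p u) = (pos w u).+1 \/ pos w u = (pos w (p u)).+1.
Proof.
case=> _ h /h; rewrite /pathg => /orP[/eqP ->|/eqP ->]; by [left|right].
Qed.
Arguments adj {w p u}.

Lemma closedB w p k : is_matching (pathg w) p ->
  (forall u, pos w u < k -> pos w (p u) = k -> False) ->
  forall u, u \in B w k -> p u \in B w k.
Proof.
move=> hm hk u; rewrite !inE => hu.
case: (eqVneq (p u) u) => [->//|hne].
case: (adj hm hne) => e.
  case: (ltngtP (pos w (p u)) k) => // h; first by exfalso; rewrite e in h; lia.
  by exfalso; apply: (hk u).
by rewrite e in hu; lia.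
Qed.
Arguments closedB {w p k}.

Lemma Inv_step w p w' : Inv w -> matching_step (pathg w) p w w' -> Inv w'.
Proof.
move=> hI hs; have hm := hs.1; have pinv := hm.1.
move=> k hk.
case: (boolP [exists u, (pos w u < k) && (pos w (p u) == k)]) => [/existsP[u /andP[hu /eqP hv]]|hno].
- have hne : p u != u by apply/eqP => e; rewrite e in hv; lia.
  have hpu : pos w u = k.-1.
    by case: (adj hm hne) => e; lia.
  set v := p u in hv hne.
  case: k hk hu hv hpu => [|j] hk hu hv hpu //= .
  have hjn : j.+1 < n by rewrite -hv pos_lt.
  have cl1 : forall x, x \in B w j -> p x \in B w j.
    apply: closedB => // x hx hpx.
    have : p x = u by apply: (pos_inj w); rewrite hpx hpu.
    move=> e; have : x = v by rewrite /v -e pinv.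
    by move=> ex; rewrite ex hv in hx; lia.
  have cl2 : forall x, x \in B w j.+2 -> p x \in B w j.+2.
    apply: closedB => // x hx hpx.
    have hxne : p x != x by apply/eqP => e; rewrite e in hpx; lia.
    case: (adj hm hxne) => e; last by lia.
    have ex : x = v by apply: (pos_inj w); lia.
    by move: hpx; rewrite ex /v pinv hpu => /= ?; lia.
  have eB : B w j.+2 = u |: (v |: B w j).
    apply/setP => x; rewrite !inE.
    case: (eqVneq x u) => [->|hxu]; first by rewrite hpu /= leqnSn.
    case: (eqVneq x v) => [->|hxv]; first by rewrite hv /= ltnSn.
    have nu : pos w x != pos w u by apply: contra hxu => /eqP/pos_inj ->.
    have nv : pos w x != pos w v by apply: contra hxv => /eqP/pos_inj ->.
    by apply/idP/idP => h; lia.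
  have vB : v \notin B w j by rewrite inE hv; lia.
  have uB : u \notin v |: B w j.
    by rewrite !inE negb_or eq_sym hne hpu /= ltnn.
  have s2 := Inv_B hI hjn.
  have s0 := Inv_B hI (ltnW (ltnW hjn)).
  rewrite eB !big_setU1 //= in s2.
  have e0 := sum_closed hs cl1.
  have huv : w' u + w' v = w u + w v by apply: hs.2.2.
  have T1 := TS j.+1; have T0 := TS j.
  case: (leqP (w' u) (w' v)) => hc.
  + exists (u |: B w j); split.
      by rewrite cardsU1 card_B ?inE ?hpu ?ltnn // ltnW // ltnW.
    rewrite big_setU1 /= ?inE ?hpu ?ltnn // e0.
    move: s0 s2; set S := \sum_(i in B w j) w i => s0 s2; lia.
  + exists (v |: B w j); split.
      by rewrite cardsU1 vB card_B // ltnW // ltnW.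
    rewrite big_setU1 /= // e0.
    move: s0 s2; set S := \sum_(i in B w j) w i => s0 s2; lia.
- exists (B w k); split; first exact: card_B.
  rewrite (sum_closed hs); first exact: Inv_B.
  apply: closedB => // x hx hpx.
  by move/existsP: hno; apply; exists x; rewrite hx hpx eqxx.
Qed.

End S.

Lemma sum_prefix n k (F : nat -> nat) : k <= n ->
  \sum_(i in [set i : 'I_n | i < k]) F i = \sum_(i < k) F i.
Proof.
move=> hk; rewrite (big_ord_widen _ F hk); apply: eq_bigl => i; by rewrite inE.
Qed.

Lemma sum_ord1 k : \sum_(i < k) 1 = k.
Proof. by rewrite sum1_card card_ord. Qed.

Theorem theorem2 :
  forall n : nat,
  exists (w0 : loads n)
         (adv : seq (loads n * partner n) -> loads n -> rel 'I_n),
    (forall h w, connected_graph (adv h w)) /\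
    (forall (w : nat -> loads n) (p : nat -> partner n),
        w 0 = w0 ->
        (forall t, matching_step (adv (hist w p t) (w t)) (p t) (w t) (w t.+1)) ->
        forall t, n - 1 <= maxdiff (w t)).
Proof.
move=> n.
exists [ffun i : 'I_n => val i], (fun _ w => @pathg n w).
split; first by move=> _ w; apply: pathg_conn.
move=> w p h0 hstep.
have main : forall t, @Inv n (w t) /\ \sum_(u in [set: 'I_n]) w t u = T n.
  elim=> [|t [IH1 IH2]].
    rewrite h0; split.
      move=> k hk; exists [set i : 'I_n | i < k]; split.
        by rewrite -sum1_card (@sum_prefix _ _ (fun _ => 1) hk) sum_ord1.
      rewrite (eq_bigr (fun i : 'I_n => nat_of_ord i)); last by move=> i _; rewrite ffunE.
      by rewrite (@sum_prefix _ _ (fun i => i) hk).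
    have -> : T n = \sum_(i in [set i : 'I_n | i < n]) (fun i => i) i.
      by rewrite (@sum_prefix n n (fun i => i) (leqnn n)).
    apply: eq_big => [i|i _]; by rewrite ?inE ?ltn_ord ?ffunE.
  split; first exact: Inv_step IH1 (hstep t).
  by rewrite -IH2; apply: (@sum_closed n _ _ _ _ _ (hstep t)) => u _; rewrite inE.
move=> t; have [I S] := main t.
case: n w p h0 hstep main I S => [|m] w p h0 hstep main I S; first by [].
have [A1 [c1 s1]] := I 1 isT.
have [A2 [c2 s2]] := I m (leqnSn m).
move/eqP/cards1P: c1 => [a ea].
have cC : #|~: A2| == 1.
  by rewrite -(eqn_add2l #|A2|) cardsC card_ord c2 addn1.
move/cards1P: cC => [b eb].
rewrite ea big_set1 in s1.
have wa : w t a = 0 by move: s1; rewrite TS /T big_ord0; lia.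
rewrite (big_setID (A:=[set: 'I_m.+1]) A2) setTI setTD eb big_set1 TS in S.
have wb : m <= w t b.
  move: S s2 => /= S s2; move: S s2; set X := \sum_(u in A2) w t u; lia.
rewrite subn1 /=.
apply: leq_trans wb _.
have h1 := @leq_bigmax _ (fun u : 'I_m.+1 => \max_(v < m.+1) `|w t u - w t v|%N) b.
have h2 := @leq_bigmax _ (fun v : 'I_m.+1 => `|w t b - w t v|%N) a.
rewrite /= wa distn0 in h2.
exact: leq_trans h2 h1.
Qed.
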